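(* Let $F(V)$ be the set of formulas of $\mathrm{q}\L^{*}$, $\sim$ the relation $p\sim q$ iff $\vdash p\leftrightarrow q$, and $[p]_\sim$ the class of $p$. On $[F(V)]_\sim$ define $-[p]_\sim:=[\neg p]_\sim$, $[p]_\sim\oplus[q]_\sim:=[\neg p\to q]_\sim$, $[0]_\sim:=[p\to p]_\sim$ (for any $p$), and let $[1]_\sim$ be the class of the constant $1$. Then $\langle [F(V)]_\sim;\oplus,-,[0]_\sim,[1]_\sim\rangle$ is an MV*-algebra.
   Context: Let $V=\{p_1,p_2,\ldots\}$ be a set of propositional variables and $F(V)$ the set of formulas built from $V$ and the constant $1$ with the binary connective $\to$ and the unary connectives $\neg$, ${}^{+}$, ${}^{-}$ (postfix ${}^+,{}^-$ bind tighter than $\neg$, which binds tighter than $\to$). Abbreviations: $p\vee q:=((p^{+}\to q^{+})^{+}\to(\neg p)^{-})\to((q^{-}\to p^{-})^{-}\to p^{-})$; an axiom written $A\leftrightarrow B$ stands for the two axioms $A\to B$ and $B\to A$, and $\vdash A\leftrightarrow B$ means $\vdash A\to B$ and $\vdash B\to A$. Axiom schemas of $\mathrm{q}\L^{*}$ (for all formulas $p,q,r$): (Q1) $(p\to q)\leftrightarrow(\neg q\to\neg p)$; (Q2) $1\leftrightarrow((1\to p)\to 1)$; (Q3) $p\leftrightarrow((q\to q)\to p)$; (Q4) $(p\to q)\leftrightarrow((q^{+}\to p^{-})\to(p^{+}\to q^{-}))$; (Q5) $\neg(p\to q)\leftrightarrow(q\to p)$; (Q6) $(p\to(\neg p\to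 q))^{+}\leftrightarrow(p^{+}\to(\neg p^{+}\to q^{+}))$; (Q7) $(p\to(q\vee r))\leftrightarrow((p\to r)\vee(p\to q))$; (Q8) $(p\vee(q\vee r))\leftrightarrow((p\vee q)\vee r)$; (Q9) $((p\to 1)\to((q\to 1)\to r))\to((q\to 1)\to((p\to 1)\to r))$; (Q10) $p\to 1$; (Q11) $((1\to 1)\to p^{+})\leftrightarrow((p\to 1)\to 1)$ and $((1\to 1)\to p^{-})\leftrightarrow((p\to\neg 1)\to\neg 1)$. Deduction rules: (R1) from $p$ and $p\to q$ infer $(r\to r)\to q$; (R2) from $(r\to r)\to(p\to q)$ infer $p\to q$; (R3) from $p\to q$ and $r\to t$ infer $(q\to r)\to(p\to t)$. $\vdash q$ means $q$ is derivable from the axioms by the rules. ($\sim$ is a congruence, so the operations are well defined.) An MV*-algebra is an algebra $\langle B;\oplus,-,0,1\rangle$ of type $\langle2,1,0,0\rangle$ such that for all $x,y,z\in B$: (MV*1) $x\oplus y=y\oplus x$; (MV*2) $(1\oplus x)\oplus(y\oplus(1\oplus z))=((1\oplus x)\oplus y)\oplus(1\oplus z)$; (MV*3) $x\oplus(-x)=0$; (MV*4) $(x\oplus 1)\oplus 1=1$; (MV*5) $x\oplus 0=x$; (MV*6) $-(x\oplus y)=(-x)\oplus(-y)$; (MV*7) $-(-x)=x$; (MV*8) $x\oplus y=(x^{+}\oplus y^{+})\oplus(x^{-}\oplus y^{-})$; (MV*9) $(-x\oplus(x\oplus y))^{+}=-(x^{+})\oplus(x^{+}\oplus y^{+})$;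 (MV*10) $x\vee y=y\vee x$; (MV*11) $x\vee(y\vee z)=(x\vee y)\vee z$; (MV*12) $x\oplus(y\vee z)=(x\oplus y)\vee(x\oplus z)$; where $x^{+}:=1\oplus(-1\oplus x)$, $x^{-}:=-1\oplus(1\oplus x)$ and $x\vee y:=(x^{+}\oplus(-x^{+}\oplus y^{+})^{+})\oplus(x^{-}\oplus(-x^{-}\oplus y^{-})^{+})$. *)

(* Defs.v *)
From Stdlib Require Import ClassicalEpsilon.

(* Formulas of qL*: variables p_1, p_2, ... are [Var 0], [Var 1], ... *)
Inductive form : Type :=
| Var : nat -> form
| One : form
| Imp : form -> form -> form
| Neg : form -> form
| Pl  : form -> form
| Mi  : form -> form.

Definition Or (p q : form) : form :=
  Imp (Imp (Pl (Imp (Pl p) (Pl q))) (Mi (Neg p)))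
      (Imp (Mi (Imp (Mi q) (Mi p))) (Mi p)).

(* Derivability in qL*: axioms Q1-Q11 (each A <-> B as the two axioms A -> B
   and B -> A) closed under rules R1-R3. *)
Inductive prov : form -> Prop :=
| Q1a p q : prov (Imp (Imp p q) (Imp (Neg q) (Neg p)))
| Q1b p q : prov (Imp (Imp (Neg q) (Neg p)) (Imp p q))
| Q2a p : prov (Imp One (Imp (Imp One p) One))
| Q2b p : prov (Imp (Imp (Imp One p) One) One)
| Q3a p q : prov (Imp p (Imp (Imp q q) p))
| Q3b p q : prov (Imp (Imp (Imp q q) p) p)
| Q4a p q : prov (Imp (Imp p q) (Imp (Imp (Pl q) (Mi p)) (Imp (Pl p) (Mi q))))
| Q4b p q : prov (Imp (Imp (Imp (Pl q) (Mi p)) (Imp (Pl p) (Mi q))) (Imp p q))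
| Q5a p q : prov (Imp (Neg (Imp p q)) (Imp q p))
| Q5b p q : prov (Imp (Imp q p) (Neg (Imp p q)))
| Q6a p q : prov (Imp (Pl (Imp p (Imp (Neg p) q)))
                      (Imp (Pl p) (Imp (Neg (Pl p)) (Pl q))))
| Q6b p q : prov (Imp (Imp (Pl p) (Imp (Neg (Pl p)) (Pl q)))
                      (Pl (Imp p (Imp (Neg p) q))))
| Q7a p q r : prov (Imp (Imp p (Or q r)) (Or (Imp p r) (Imp p q)))
| Q7b p q r : prov (Imp (Or (Imp p r) (Imp p q)) (Imp p (Or q r)))
| Q8a p q r : prov (Imp (Or p (Or q r)) (Or (Or p q) r))
| Q8b p q r : prov (Imp (Or (Or p q) r) (Or p (Or q r)))
| Q9 p q r : prov (Imp (Imp (Imp p One) (Imp (Imp q One) r))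
                       (Imp (Imp q One) (Imp (Imp p One) r)))
| Q10 p : prov (Imp p One)
| Q11a p : prov (Imp (Imp (Imp One One) (Pl p)) (Imp (Imp p One) One))
| Q11b p : prov (Imp (Imp (Imp p One) One) (Imp (Imp One One) (Pl p)))
| Q11c p : prov (Imp (Imp (Imp One One) (Mi p))
                     (Imp (Imp p (Neg One)) (Neg One)))
| Q11d p : prov (Imp (Imp (Imp p (Neg One)) (Neg One))
                     (Imp (Imp One One) (Mi p)))
| R1 p q r : prov p -> prov (Imp p q) -> prov (Imp (Imp r r) q)
| R2 p q r : prov (Imp (Imp r r) (Imp p q)) -> prov (Imp p q)
| R3 p q r t : prov (Imp p q) -> prov (Imp r t) ->
               prov (Imp (Imp q r) (Imp p t)).

Definition equiv (p q : form) : Prop := prov (Imp p q) /\ prov (Imp q p).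

Definition Quot : Type := { S : form -> Prop | exists p, S = equiv p }.

Definition cls (p : form) : Quot := exist _ (equiv p) (ex_intro _ p eq_refl).

Definition rep (x : Quot) : form :=
  proj1_sig (constructive_indefinite_description _ (proj2_sig x)).

Definition qneg (x : Quot) : Quot := cls (Neg (rep x)).
Definition qplus (x y : Quot) : Quot := cls (Imp (Neg (rep x)) (rep y)).
(* [0]_~ := [p -> p]; we take p = p_1 (independence of the choice is part of
   what ~ being a congruence/ Q3 gives; any choice is allowed by the paper). *)
Definition qzero : Quot := cls (Imp (Var 0) (Var 0)).
Definition qone : Quot := cls One.

Section MVStar.
Variables (B : Type) (add : B -> B -> B) (opp : B -> B) (zero one : B).
Definition mvpos (x : B) : B := add one (add (opp one) x).
Definition mvneg (x : B) : B := add (opp one) (add one x).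
Definition mvjoin (x y : B) : B :=
  add (add (mvpos x) (mvpos (add (opp (mvpos x)) (mvpos y))))
      (add (mvneg x) (mvpos (add (opp (mvneg x)) (mvneg y)))).

Definition is_MVstar : Prop :=
  (forall x y, add x y = add y x) /\
  (forall x y z, add (add one x) (add y (add one z))
                 = add (add (add one x) y) (add one z)) /\
  (forall x, add x (opp x) = zero) /\
  (forall x, add (add x one) one = one) /\
  (forall x, add x zero = x) /\
  (forall x y, opp (add x y) = add (opp x) (opp y)) /\
  (forall x, opp (opp x) = x) /\
  (forall x y, add x y = add (add (mvpos x) (mvpos y)) (add (mvneg x) (mvneg y))) /\
  (forall x y, mvpos (add (opp x) (add x y))
               = add (opp (mvpos x)) (add (mvpos x) (mvpos y))) /\
  (forall x y, mvjoin x y = mvjoin y x) /\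
  (forall x y z, mvjoin x (mvjoin y z) = mvjoin (mvjoin x y) z) /\
  (forall x y z, add x (mvjoin y z) = mvjoin (add x y) (add x z)).
End MVStar.

(* Main.v *)
Require Import Defs.
From Stdlib Require Import ClassicalEpsilon FunctionalExtensionality PropExtensionality ProofIrrelevance.

Lemma MP A B C : prov A -> prov (Imp A (Imp B C)) -> prov (Imp B C).
Proof. intros H1 H2. apply (R2 _ _ One). exact (R1 _ _ One H1 H2). Qed.

Lemma prefl p : prov (Imp p p).
Proof.
  set (O1 := Imp One One).
  assert (H : forall r, prov (Imp (Imp O1 r) (Imp O1 r))).
  { intro r. set (P := Imp O1 r).
    pose proof (R3 _ _ _ _ (Q3a P One) (Q3b P One)) as H3.
    exact (MP _ _ _ (Q9 One One r) H3). }
  pose proof (R3 _ _ _ _ (Q3a p One) (Q3b p One)) as H3.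
  exact (MP _ _ _ (H p) H3).
Qed.

Lemma ptrans a b c : prov (Imp a b) -> prov (Imp b c) -> prov (Imp a c).
Proof.
  intros H1 H2. pose proof (R3 _ _ _ _ H1 (prefl c)) as H3.
  exact (MP _ _ _ H2 H3).
Qed.

Lemma pmono a a' b b' : prov (Imp a' a) -> prov (Imp b b') ->
  prov (Imp (Imp a b) (Imp a' b')).
Proof. intros H1 H2. exact (R3 _ _ _ _ H1 H2). Qed.

Lemma eq_refl' p : equiv p p. Proof. split; apply prefl. Qed.
Lemma eq_sym' p q : equiv p q -> equiv q p. Proof. intros [H1 H2]; split; auto. Qed.
Lemma eq_trans' p q r : equiv p q -> equiv q r -> equiv p r.
Proof. intros [H1 H2] [H3 H4]; split; eapply ptrans; eauto. Qed.

Lemma eq_imp a a' b b' : equiv a a' -> equiv b b' -> equiv (Imp a b) (Imp a' b').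
Proof. intros [H1 H2] [H3 H4]; split; apply pmono; auto. Qed.

Lemma pneg a b : prov (Imp a b) -> prov (Imp (Neg b) (Neg a)).
Proof. intro H. exact (MP _ _ _ H (Q1a a b)). Qed.

Lemma eq_neg a b : equiv a b -> equiv (Neg a) (Neg b).
Proof. intros [H1 H2]; split; apply pneg; auto. Qed.

Lemma eq_pl a b : equiv a b -> equiv (Pl a) (Pl b).
Proof.
  intro H.
  assert (E : forall c, equiv (Pl c) (Imp (Imp c One) One)).
  { intro c. apply eq_trans' with (Imp (Imp One One) (Pl c)).
    - split; [apply Q3a | apply Q3b].
    - split; [apply Q11a | apply Q11b]. }
  eapply eq_trans'; [apply E|]. eapply eq_trans'; [|apply eq_sym', E].
  apply eq_imp; [apply eq_imp|]; auto using eq_refl'.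
Qed.

Lemma eq_mi a b : equiv a b -> equiv (Mi a) (Mi b).
Proof.
  intro H.
  assert (E : forall c, equiv (Mi c) (Imp (Imp c (Neg One)) (Neg One))).
  { intro c. apply eq_trans' with (Imp (Imp One One) (Mi c)).
    - split; [apply Q3a | apply Q3b].
    - split; [apply Q11c | apply Q11d]. }
  eapply eq_trans'; [apply E|]. eapply eq_trans'; [|apply eq_sym', E].
  apply eq_imp; [apply eq_imp|]; auto using eq_refl'.
Qed.

Lemma cls_eq a b : equiv a b -> cls a = cls b.
Proof.
  intro H. unfold cls.
  assert (E : equiv a = equiv b).
  { apply functional_extensionality; intro x. apply propositional_extensionality.
    split; intro H'; eapply eq_trans'; eauto using eq_sym'. }
  revert H. generalize (ex_intro (fun p => equiv a = equiv p) a eq_refl).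
  generalize (ex_intro (fun p => equiv b = equiv p) b eq_refl).
  rewrite E. intros e1 e2 _. f_equal. apply proof_irrelevance.
Qed.

Lemma cls_rep x : cls (rep x) = x.
Proof.
  unfold rep. destruct (constructive_indefinite_description _ (proj2_sig x)) as [p Hp].
  simpl. destruct x as [S HS]. simpl in *. subst S. unfold cls. f_equal. apply proof_irrelevance.
Qed.

Lemma rep_cls a : equiv (rep (cls a)) a.
Proof.
  unfold rep. destruct (constructive_indefinite_description _ (proj2_sig (cls a))) as [p Hp].
  simpl in *. assert (H : equiv a a) by apply eq_refl'. rewrite Hp in H. exact H.
Qed.

Definition qI x y := cls (Imp (rep x) (rep y)).
Definition qN x := cls (Neg (rep x)).
Definition qP x := cls (Pl (rep x)).
Definition qM x := cls (Mi (rep x)).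

Lemma qI_cls a b : qI (cls a) (cls b) = cls (Imp a b).
Proof. apply cls_eq, eq_imp; apply rep_cls. Qed.
Lemma qN_cls a : qN (cls a) = cls (Neg a).
Proof. apply cls_eq, eq_neg; apply rep_cls. Qed.
Lemma qP_cls a : qP (cls a) = cls (Pl a).
Proof. apply cls_eq, eq_pl; apply rep_cls. Qed.
Lemma qM_cls a : qM (cls a) = cls (Mi a).
Proof. apply cls_eq, eq_mi; apply rep_cls. Qed.
Lemma qplus_cls a b : qplus (cls a) (cls b) = cls (Imp (Neg a) b).
Proof. apply cls_eq, eq_imp; [apply eq_neg|]; apply rep_cls. Qed.

Lemma qplus_def x y : qplus x y = qI (qN x) y.
Proof.
  rewrite <- (cls_rep x), <- (cls_rep y).
  rewrite qplus_cls, qN_cls, qI_cls. reflexivity.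
Qed.

Ltac lift := repeat match goal with x : Quot |- _ => rewrite <- (cls_rep x); generalize (rep x); clear x; intro end;
  unfold qone, qzero; repeat rewrite ?qI_cls, ?qN_cls, ?qP_cls, ?qM_cls; apply cls_eq; split.

Definition Z := qzero.

Lemma thm0 X q : prov X -> prov (Imp (Imp q q) X).
Proof. intro H. exact (MP _ _ _ H (Q3a X q)). Qed.

Lemma L0 u : qI u u = Z.
Proof. unfold Z. lift; apply thm0, prefl. Qed.

Lemma L1 x y : qI x y = qI (qN y) (qN x).
Proof. lift; [apply Q1a | apply Q1b]. Qed.

Lemma L2 x : qone = qI (qI qone x) qone.
Proof. lift; [apply Q2a | apply Q2b]. Qed.

Lemma L3 x : x = qI Z x.
Proof. unfold Z. lift; [apply Q3a | apply Q3b]. Qed.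

Lemma L4 x y : qI x y = qI (qI (qP y) (qM x)) (qI (qP x) (qM y)).
Proof. lift; [apply Q4a | apply Q4b]. Qed.

Lemma L5 x y : qN (qI x y) = qI y x.
Proof. lift; [apply Q5a | apply Q5b]. Qed.

Lemma L6 x y : qP (qI x (qI (qN x) y)) = qI (qP x) (qI (qN (qP x)) (qP y)).
Proof. lift; [apply Q6a | apply Q6b]. Qed.

Definition qOr x y := qI (qI (qP (qI (qP x) (qP y))) (qM (qN x))) (qI (qM (qI (qM y) (qM x))) (qM x)).

Lemma qOr_cls a b : qOr (cls a) (cls b) = cls (Or a b).
Proof. unfold qOr. rewrite ?qI_cls, ?qN_cls, ?qP_cls, ?qM_cls, ?qI_cls, ?qP_cls, ?qM_cls, ?qI_cls. reflexivity. Qed.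

Lemma L7 x y z : qI x (qOr y z) = qOr (qI x z) (qI x y).
Proof.
  rewrite <- (cls_rep x), <- (cls_rep y), <- (cls_rep z).
  rewrite !qOr_cls, !qI_cls, qOr_cls. apply cls_eq; split; [apply Q7a | apply Q7b].
Qed.

Lemma L8 x y z : qOr x (qOr y z) = qOr (qOr x y) z.
Proof.
  rewrite <- (cls_rep x), <- (cls_rep y), <- (cls_rep z).
  rewrite !qOr_cls. apply cls_eq; split; [apply Q8a | apply Q8b].
Qed.

Lemma L9 x y z : qI (qI x qone) (qI (qI y qone) z) = qI (qI y qone) (qI (qI x qone) z).
Proof. lift; apply Q9. Qed.

Lemma L11a x : qP x = qI (qI x qone) qone.
Proof.
  rewrite <- (cls_rep x). unfold qone. rewrite ?qI_cls, ?qP_cls. apply cls_eq.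
  apply eq_trans' with (Imp (Imp One One) (Pl (rep x))).
  - split; [apply Q3a | apply Q3b].
  - split; [apply Q11a | apply Q11b].
Qed.

Lemma L11b x : qM x = qI (qI x (qN qone)) (qN qone).
Proof.
  rewrite <- (cls_rep x). unfold qone. rewrite ?qN_cls, ?qI_cls, ?qM_cls. apply cls_eq.
  apply eq_trans' with (Imp (Imp One One) (Mi (rep x))).
  - split; [apply Q3a | apply Q3b].
  - split; [apply Q11c | apply Q11d].
Qed.

Lemma Nx x : qN x = qI x Z.
Proof. rewrite <- L5, <- L3. reflexivity. Qed.
Lemma NN x : qN (qN x) = x.
Proof. rewrite (Nx x), L5, <- L3. reflexivity. Qed.
Lemma I_add x y : qI x y = qplus (qN x) y.
Proof. rewrite qplus_def, NN. reflexivity. Qed.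
Lemma C1 x y : qplus x y = qplus y x.
Proof. rewrite !qplus_def, L1, NN. reflexivity. Qed.
Lemma D6 x y : qN (qplus x y) = qplus (qN x) (qN y).
Proof. rewrite !qplus_def, L5, L1. reflexivity. Qed.
Lemma D5 x : qplus x Z = x.
Proof. rewrite qplus_def, <- L5, <- L3, NN. reflexivity. Qed.
Lemma D3 x : qplus x (qN x) = Z.
Proof. rewrite qplus_def. apply L0. Qed.
Lemma D4 x : qplus (qplus x qone) qone = qone.
Proof. rewrite !qplus_def, L5, <- L2. reflexivity. Qed.
Lemma P_def x : qP x = qplus qone (qplus (qN qone) x).
Proof. rewrite L11a, !qplus_def, NN, L1, L5. reflexivity. Qed.
Lemma M_def x : qM x = qplus (qN qone) (qplus qone x).
Proof. rewrite L11b, !qplus_def, NN, L1, L5, NN. reflexivity. Qed.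
Lemma Pdef' x : mvpos Quot qplus qN qone x = qP x.
Proof. unfold mvpos. rewrite P_def. reflexivity. Qed.
Lemma Mdef' x : mvneg Quot qplus qN qone x = qM x.
Proof. unfold mvneg. rewrite M_def. reflexivity. Qed.
Lemma PN x : qP (qN x) = qN (qM x).
Proof. rewrite P_def, M_def, !D6, NN. reflexivity. Qed.
Lemma MN x : qM (qN x) = qN (qP x).
Proof. rewrite P_def, M_def, !D6, !NN. reflexivity. Qed.
Lemma NM x : qN (qM x) = qP (qN x).
Proof. rewrite PN. reflexivity. Qed.

Lemma J x y : mvjoin Quot qplus qN qone x y = qOr x y.
Proof.
  unfold mvjoin. rewrite !Pdef', !Mdef'. unfold qOr.
  rewrite !I_add, !MN, !NM, !D6, !NN.
  rewrite !PN, !NN.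
  rewrite (C1 (qP x)), (C1 (qM y)), (C1 (qM x)). reflexivity.
Qed.

Lemma OrC y z : qOr y z = qOr z y.
Proof. pose proof (L7 Z y z) as H. rewrite <- !L3 in H. exact H. Qed.

Lemma Ex a b c : qplus (qplus a qone) (qplus (qplus c qone) b)
                   = qplus (qplus c qone) (qplus (qplus a qone) b).
Proof. pose proof (L9 (qN a) (qN c) (qN b)) as H.
      rewrite !I_add in H. rewrite !D6 in H. rewrite !NN in H. apply (f_equal qN) in H.
      rewrite !D6, !NN in H. exact H. Qed.

Lemma A2 x y z : qplus (qplus qone x) (qplus y (qplus qone z)) = qplus (qplus (qplus qone x) y) (qplus qone z).
Proof.
    rewrite (C1 qone x), (C1 qone z), (C1 y (qplus z qone)), Ex.
    rewrite (C1 (qplus (qplus x qone) y)). reflexivity. Qed.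
Lemma A8 x y : qplus x y = qplus (qplus (mvpos Quot qplus qN qone x) (mvpos Quot qplus qN qone y)) (qplus (mvneg Quot qplus qN qone x) (mvneg Quot qplus qN qone y)).
Proof. rewrite !Pdef', !Mdef'. rewrite qplus_def, L4, !I_add, MN, PN, !D6, !NN.
    rewrite (C1 (qP y)). reflexivity. Qed.

Lemma A9 x y : mvpos Quot qplus qN qone (qplus (qN x) (qplus x y)) = qplus (qN (mvpos Quot qplus qN qone x)) (qplus (mvpos Quot qplus qN qone x) (mvpos Quot qplus qN qone y)).
Proof. rewrite !Pdef'. pose proof (L6 x y) as H. rewrite !I_add, !NN in H. exact H. Qed.
Lemma A10 x y : mvjoin Quot qplus qN qone x y = mvjoin Quot qplus qN qone y x.
Proof. rewrite !J. exact (OrC _ _). Qed.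
Lemma A11 x y z : mvjoin Quot qplus qN qone x (mvjoin Quot qplus qN qone y z) = mvjoin Quot qplus qN qone (mvjoin Quot qplus qN qone x y) z.
Proof. rewrite (J y z), (J x y), (J x (qOr y z)), (J (qOr x y) z). exact (L8 x y z). Qed.
Lemma A12 x y z : qplus x (mvjoin Quot qplus qN qone y z) = mvjoin Quot qplus qN qone (qplus x y) (qplus x z).
Proof. rewrite (J y z), (J (qplus x y) (qplus x z)). rewrite (qplus_def x (qOr y z)), L7, <- (qplus_def x z), <- (qplus_def x y). exact (OrC _ _). Qed.


Theorem proposition5p4 : is_MVstar Quot qplus qneg qzero qone.
Proof.
  change (is_MVstar Quot qplus qN Z qone).
  split; [exact C1|]. split; [exact A2|].
  split; [exact D3|]. split; [exact D4|]. split; [exact D5|].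
  split; [exact D6|]. split; [exact NN|]. split; [exact A8|].
  split; [exact A9|]. split; [exact A10|]. split; [exact A11|]. exact A12.
Qed.
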